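(* For every $\omega\in\mathbb{R}$ and every $a\in\mathbb{R}$ there exists $b_0>0$ such that for all $b\ge b_0$, $\omega$ lies in the interior of the rotation interval $I(F_{a,b})$.
   Context: $F_{a,b}(x)=x+a+\frac{b}{2\pi}\sin(2\pi x)$ for $(a,b)\in\mathbb{R}\times[0,\infty)$. For such a lift $F$, with $\underline{\rho}_F(x)=\liminf_{n}F^n(x)/n$ and $\overline{\rho}_F(x)=\limsup_{n}F^n(x)/n$, the rotation interval is $I(F)=[\inf_x\underline{\rho}_F(x),\ \sup_x\overline{\rho}_F(x)]$. *)

(* Defs.v *)
From Stdlib Require Import Reals.
From Coquelicot Require Import Coquelicot.
Open Scope R_scope.

Definition Fab (a b : R) (x : R) : R := x + a + b / (2 * PI) * sin (2 * PI * x).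

Fixpoint iter_fun (f : R -> R) (n : nat) (x : R) : R :=
  match n with O => x | S k => f (iter_fun f k x) end.

Definition rho_lower (f : R -> R) (x : R) : Rbar :=
  LimInf_seq (fun n => iter_fun f n x / INR n).
Definition rho_upper (f : R -> R) (x : R) : Rbar :=
  LimSup_seq (fun n => iter_fun f n x / INR n).

Definition rot_int_left (f : R -> R) : Rbar :=
  Rbar_glb (fun r => exists x, rho_lower f x = r).
Definition rot_int_right (f : R -> R) : Rbar :=
  Rbar_lub (fun r => exists x, rho_upper f x = r).

Definition in_interior_rot_interval (f : R -> R) (w : R) : Prop :=
  Rbar_lt (rot_int_left f) (Finite w) /\ Rbar_lt (Finite w) (rot_int_right f).

(* Main.v *)
Require Import Defs.
From Stdlib Require Import Reals Lra Lia ZArith.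
From Coquelicot Require Import Coquelicot.
Open Scope R_scope.

Lemma sin_period_Z (y : R) (m : Z) : sin (y + 2 * IZR m * PI) = sin y.
Proof.
  destruct m as [|p|p].
  - simpl. rewrite Rmult_0_r, Rmult_0_l, Rplus_0_r. reflexivity.
  - replace (IZR (Z.pos p)) with (INR (Pos.to_nat p)) by (rewrite INR_IZR_INZ, positive_nat_Z; reflexivity).
    apply sin_period.
  - replace (IZR (Z.neg p)) with (- INR (Pos.to_nat p)).
    + rewrite <- (sin_period (y + 2 * - INR (Pos.to_nat p) * PI) (Pos.to_nat p)).
      f_equal. ring.
    + rewrite INR_IZR_INZ, positive_nat_Z, <- Ropp_Ropp_IZR. reflexivity.
Qed.

Lemma iter_trans (a b x : R) (k : Z) :
  Fab a b x = x + IZR k -> forall n, iter_fun (Fab a b) n x = x + INR n * IZR k.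
Proof.
  intros Hx n. induction n as [|n IH].
  - simpl. ring.
  - simpl iter_fun. rewrite IH. unfold Fab in *.
    replace (2 * PI * (x + INR n * IZR k)) with
      (2 * PI * x + 2 * IZR (Z.of_nat n * k) * PI)
      by (rewrite mult_IZR, <- INR_IZR_INZ; ring).
    rewrite sin_period_Z, S_INR. lra.
Qed.

Lemma lim_trans (x k : R) :
  is_lim_seq (fun n => (x + INR n * k) / INR n) k.
Proof.
  apply is_lim_seq_ext_loc with (u := fun n => x * / INR n + k).
  - exists 1%nat. intros n Hn. assert (0 < INR n) by (apply lt_0_INR; lia).
    field. lra.
  - replace (Finite k) with (Finite (x * 0 + k)) by (f_equal; ring).
    apply is_lim_seq_plus'.
    + replace (Finite (x * 0)) with (Rbar_mult x 0) by reflexivity.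
      apply is_lim_seq_scal_l.
      replace (Finite 0) with (Rbar_inv p_infty) by reflexivity.
      apply is_lim_seq_inv. apply is_lim_seq_INR. discriminate.
    + apply is_lim_seq_const.
Qed.

Lemma exists_trans (a b : R) (k : Z) :
  0 < b -> Rabs (IZR k - a) * (2 * PI) <= b -> exists x, Fab a b x = x + IZR k.
Proof.
  intros Hb Hk.
  assert (HP := PI_RGT_0).
  set (t := IZR k - a) in *.
  assert (H : - b <= t * (2 * PI) <= b).
  { unfold Rabs in Hk. destruct (Rcase_abs t); nra. }
  set (s := t * (2 * PI) / b).
  assert (Hs : -1 <= s <= 1).
  { unfold s, Rdiv. assert (0 < / b) by (apply Rinv_0_lt_compat; lra).
    split.
    - replace (-1) with (- b * / b) by (field; lra). nra.
    - replace 1 with (b * / b) by (field; lra). nra. }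
  exists (asin s / (2 * PI)). unfold Fab.
  replace (2 * PI * (asin s / (2 * PI))) with (asin s) by (field; lra).
  rewrite sin_asin by exact Hs. unfold s, t. field. lra.
Qed.

Theorem lemma3p5p1 :
  forall omega a : R, exists b0 : R, 0 < b0 /\
    forall b : R, b0 <= b -> in_interior_rot_interval (Fab a b) omega.
Proof.
  intros omega a.
  assert (HP := PI_RGT_0).
  exists (2 * PI * (Rabs (omega - a) + 2)).
  assert (Ha := Rabs_pos (omega - a)).
  split; [nra|].
  intros b Hb.
  destruct (archimed omega) as [H1 H2].
  set (k2 := up omega) in *.
  set (k1 := (k2 - 2)%Z).
  assert (Hk1 : IZR k1 = IZR k2 - 2) by (unfold k1; rewrite minus_IZR; reflexivity).
  assert (Hbd : forall k : Z, Rabs (IZR k - omega) <= 2 ->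
            Rabs (IZR k - a) * (2 * PI) <= b).
  { intros k Hk.
    assert (Rabs (IZR k - a) <= Rabs (omega - a) + 2).
    { replace (IZR k - a) with ((IZR k - omega) + (omega - a)) by ring.
      eapply Rle_trans; [apply Rabs_triang|]. lra. }
    nra. }
  assert (Hb0 : 0 < b) by nra.
  destruct (exists_trans a b k1 Hb0) as [x1 Hx1].
  { apply Hbd. rewrite Hk1. unfold Rabs; destruct Rcase_abs; lra. }
  destruct (exists_trans a b k2 Hb0) as [x2 Hx2].
  { apply Hbd. unfold Rabs; destruct Rcase_abs; lra. }
  split.
  - apply Rbar_le_lt_trans with (Finite (IZR k1)).
    + unfold rot_int_left.
      replace (Finite (IZR k1)) with (Rbar_glb (fun r => r = Finite (IZR k1))).
      * apply Rbar_glb_subset. intros r ->. exists x1.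
        unfold rho_lower. apply is_LimInf_seq_unique, is_lim_LimInf_seq.
        eapply is_lim_seq_ext; [|apply (lim_trans x1 (IZR k1))].
        intros n. simpl. rewrite (iter_trans a b x1 k1 Hx1). reflexivity.
      * apply Rbar_is_glb_unique. split.
        -- intros r ->. apply Rbar_le_refl.
        -- intros c Hc. apply Hc. reflexivity.
    + simpl. lra.
  - apply Rbar_lt_le_trans with (Finite (IZR k2)).
    + simpl. lra.
    + unfold rot_int_right.
      replace (Finite (IZR k2)) with (Rbar_lub (fun r => r = Finite (IZR k2))).
      * apply Rbar_lub_subset. intros r ->. exists x2.
        unfold rho_upper. apply is_LimSup_seq_unique, is_lim_LimSup_seq.
        eapply is_lim_seq_ext; [|apply (lim_trans x2 (IZR k2))].
        intros n. simpl. rewrite (iter_trans a b x2 k2 Hx2). reflexivity.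
      * apply Rbar_is_lub_unique. split.
        -- intros r ->. apply Rbar_le_refl.
        -- intros c Hc. apply Hc. reflexivity.
Qed.
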